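(* Let $\mathcal{M}=(S,A,\Delta,T)$ be a \~pMDP that is isomorphic to its MEC-quotient $\mathcal{M}_{/\mathrm{MEC}}$, with graph $(V,E)$. Then for every graph-preserving valuation $\mathsf{val}$ and every $(s,a)\in S\times A$ with $(s,a)\trianglelefteq (sE\setminus\{(s,a)\})$, we have $\max_\sigma \mathbb{P}^{s}_{\mathcal{M}^\sigma_{\mathsf{val}}}[\Diamond\mathit{fin}]=\max_{\sigma'}\mathbb{P}^{s}_{\mathcal{N}^{\sigma'}_{\mathsf{val}}}[\Diamond\mathit{fin}]$, where $\mathcal{N}=(S,A,\Delta\setminus\{(s,a,s')\in\Delta\mid s'\in S\},T)$ is obtained by removing all transitions of the pair $(s,a)$.
   Context: A \~pMDP is $(S,A,\Delta,T)$ with finite states $S$, actions $A$, targets $T=\{\mathit{fin},\mathit{fail}\}$ (no outgoing transitions), and transitions $\Delta\subseteq(S\setminus T)\times A\times S$. Graph: $V=S\cup((S\setminus T)\times A)$, edge $((s,a),s')$ iff $(s,a,s')\in\Delta$, edge $(s,(s,a))$ iff $(s,a,s')\in\Delta$ for some $s'\ne\mathit{fail}$; $vE$ is the successor set. A graph-preserving valuation $\mathsf{val}$ assigns to each state-action pair a full-support probability distribution on its $\Delta$-successors. A strategy and $\mathsf{val}$ induce a Markov chain $\mathcal{M}^\sigma_{\mathsf{val}}$; $\mathbb{P}^s[\Diamond\mathit{fin}]$ is the probability of reaching $\mathit{fin}$ from $s$. Values: $\mathrm{Rew}^*_{\mathsf{val}}(s)=\max_\sigma\mathbb{P}^s[\Diamond\mathit{fin}]$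 for states, and for $(s,a)$, $\mathrm{Rew}^*_{\mathsf{val}}((s,a))=\sum_{s'}\mathsf{val}_{(s,a)}(s')\mathrm{Rew}^*_{\mathsf{val}}(s')$. For $v\in V,W\subseteq V$: $v\trianglelefteq W$ iff for every graph-preserving $\mathsf{val}$ some $w\in W$ has $\mathrm{Rew}^*_{\mathsf{val}}(v)\le\mathrm{Rew}^*_{\mathsf{val}}(w)$. A sub-MDP is a pair $(P,B)$ with $P\subseteq S$, $B$ a set of pairs $(p,a)$ with $(p,(p,a))\in E$, such that every $p\in P$ has some $(p,a)\in B$ and every $\Delta$-successor of every $(p,a)\in B$ lies in $P$. An end component is a sub-MDP whose induced subgraph on $P\cup B$ is strongly connected; a MEC is an end component $(P,B)$ such that no other end component $(P',B')$ has $B\subseteq B'$. For $s\in S$, $[s]$ denotes $P$ if $s$ lies in a (unique) MEC $(P,B)$ and $\{s\}$ otherwise. The MEC-quotient is $\mathcal{M}_{/\mathrm{MEC}}=(S',A,\Delta',T')$ with $S'=\{[s]\mid s\in S\}$, $T'=\{[t]\mid t\in T\}$ and $\Delta'=\{([s],a,[s'])\mid (s,a,s')\in\Delta,\ [s]\neq[s']\}$. *)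

(* Defs.v *)
From HB Require Import structures.
From mathcomp Require Import all_boot all_order all_algebra.
From mathcomp Require Import classical_sets boolp reals.
Set Implicit Arguments. Unset Strict Implicit. Unset Printing Implicit Defensive.
Import Order.TTheory GRing.Theory Num.Theory.
Local Open Scope ring_scope.
Local Open Scope classical_set_scope.

(* A ~pMDP on finite states S and finite actions A with targets fin, fail is
   given by its transition relation d : S -> A -> S -> bool ((s,a,s') ∈ Δ). *)
Definition is_pMDP (S A : finType) (fin fail : S) (d : S -> A -> S -> bool) :=
  fin != fail /\ forall s a s', d s a s' -> (s != fin) && (s != fail).

Definition vertex (S A : finType) := (S + (S * A))%type.

Definition edge (S A : finType) (fail : S) (d : S -> A -> S -> bool)
  : rel (vertex S A) := fun u v =>
  match u, v with
  | inl s, inr (s0, a) => (s0 == s) && [exists s', d s a s' && (s' != fail)]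
  | inr (s, a), inl s' => d s a s'
  | _, _ => false
  end.

Definition succs (S A : finType) (fail : S) (d : S -> A -> S -> bool)
  (v : vertex S A) : {set vertex S A} := [set w | edge fail d v w].

Definition graph_preserving (R : realType) (S A : finType)
  (d : S -> A -> S -> bool) (val : S -> A -> S -> R) :=
  (forall s a s', d s a s' -> 0 < val s a s') /\
  (forall s a s', ~~ d s a s' -> val s a s' = 0) /\
  (forall s a, [exists s', d s a s'] -> \sum_(s' : S) val s a s' = 1).

Definition avail (S A : finType) (d : S -> A -> S -> bool) s a :=
  [exists s', d s a s'].

(* general (history-dependent, randomized) strategies: the history is the
   sequence of (state, action) pairs played so far, the current state is s *)
Definition is_strategy (R : realType) (S A : finType) (d : S -> A -> S -> bool)
  (sigma : seq (S * A) -> S -> A -> R) :=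
  forall h s,
    (forall a, 0 <= sigma h s a) /\
    (forall a, ~~ avail d s a -> sigma h s a = 0) /\
    ([exists a, avail d s a] -> \sum_(a : A) sigma h s a = 1).

Fixpoint reach_within (R : realType) (S A : finType) (fin : S)
  (d : S -> A -> S -> bool) (val : S -> A -> S -> R)
  (sigma : seq (S * A) -> S -> A -> R) (n : nat) (h : seq (S * A)) (s : S)
  : R :=
  match n with
  | 0 => (s == fin)%:R
  | n'.+1 =>
      if s == fin then 1 else
      \sum_(a : A) sigma h s a *
        \sum_(s' : S | d s a s') val s a s' *
            reach_within fin d val sigma n' (rcons h (s, a)) s'
  end.

(* P^s[◇fin] = measure of the union of the (disjoint) cylinders of paths
   reaching fin = sup over n of the probability of reaching fin within n steps *)
Definition Preach (R : realType) (S A : finType) (fin : S)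
  (d : S -> A -> S -> bool) (val : S -> A -> S -> R)
  (sigma : seq (S * A) -> S -> A -> R) (s : S) : R :=
  sup (range (fun n => reach_within fin d val sigma n [::] s)).

Definition RewS (R : realType) (S A : finType) (fin : S)
  (d : S -> A -> S -> bool) (val : S -> A -> S -> R) (s : S) : R :=
  sup [set x | exists sigma, is_strategy d sigma /\ x = Preach fin d val sigma s].

Definition RewV (R : realType) (S A : finType) (fin : S)
  (d : S -> A -> S -> bool) (val : S -> A -> S -> R) (v : vertex S A) : R :=
  match v with
  | inl s => RewS fin d val s
  | inr (s, a) => \sum_(s' : S) val s a s' * RewS fin d val s'
  end.

Definition trianglelefteq (R : realType) (S A : finType) (fin fail : S)
  (d : S -> A -> S -> bool) (v : vertex S A) (W : {set vertex S A}) :=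
  forall val : S -> A -> S -> R, graph_preserving d val ->
    exists2 w, w \in W & RewV fin d val v <= RewV fin d val w.

Definition is_subMDP (S A : finType) (fail : S) (d : S -> A -> S -> bool)
  (P : {set S}) (B : {set S * A}) : bool :=
  [forall p in P, exists a, (p, a) \in B] &&
  [forall pa in B, edge fail d (inl pa.1) (inr pa) &&
                   [forall s', d pa.1 pa.2 s' ==> (s' \in P)]].

Definition Vset (S A : finType) (P : {set S}) (B : {set S * A})
  : {set vertex S A} :=
  [set v | match v with inl s => s \in P | inr pa => pa \in B end].

Definition is_EC (S A : finType) (fail : S) (d : S -> A -> S -> bool)
  (P : {set S}) (B : {set S * A}) : bool :=
  is_subMDP fail d P B &&
  [forall u in Vset P B, forall v in Vset P B,
     connect (fun x y => [&& x \in Vset P B, y \in Vset P B & edge fail d x y]) u v].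

Definition is_MEC (S A : finType) (fail : S) (d : S -> A -> S -> bool)
  (P : {set S}) (B : {set S * A}) : bool :=
  is_EC fail d P B &&
  [forall P' : {set S}, forall B' : {set S * A},
     (is_EC fail d P' B' && (B \subset B')) ==> ((P', B') == (P, B))].

Definition cls (S A : finType) (fail : S) (d : S -> A -> S -> bool) (s : S)
  : {set S} :=
  if [pick PB : {set S} * {set S * A} | is_MEC fail d PB.1 PB.2 && (s \in PB.1)]
  is Some PB then PB.1 else [set s].

Definition quot_states (S A : finType) (fail : S) (d : S -> A -> S -> bool)
  : {set {set S}} := [set cls fail d s | s : S].

Definition quot_trans (S A : finType) (fail : S) (d : S -> A -> S -> bool)
  (X : {set S}) (a : A) (Y : {set S}) : bool :=
  [exists s, exists s',
     [&& cls fail d s == X, cls fail d s' == Y, d s a s' & X != Y]].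

Definition iso_to_quotient (S A : finType) (fin fail : S)
  (d : S -> A -> S -> bool) :=
  exists f : S -> {set S},
    [/\ injective f,
        (forall s, f s \in quot_states fail d),
        (forall X, X \in quot_states fail d -> exists s, f s = X),
        f fin = cls fail d fin /\ f fail = cls fail d fail &
        forall s a s', d s a s' = quot_trans fail d (f s) a (f s')].

Definition remove_pair (S A : finType) (d : S -> A -> S -> bool) (s : S) (a : A)
  : S -> A -> S -> bool :=
  fun x b y => d x b y && ~~ ((x == s) && (b == a)).

(* Main.v *)
Require Import Defs.
From HB Require Import structures.
From mathcomp Require Import all_boot all_order all_algebra.
From mathcomp Require Import classical_sets boolp reals.
From mathcomp Require Import lra.
Set Implicit Arguments. Unset Strict Implicit. Unset Printing Implicit Defensive.
Import Order.TTheory GRing.Theory Num.Theory.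

Section ECs.
Variables (S A : finType) (fail : S) (d : S -> A -> S -> bool).

Lemma last_edge (T : finType) (e : rel T) u v :
  connect e u v -> u != v -> exists w, e w v.
Proof.
move=> /connectP [p pth ->]; case/lastP: p pth => [|p z] //=.
  by rewrite eqxx.
by rewrite rcons_path => /andP [_ H] _; exists (last u p); rewrite last_rcons.
Qed.

Definition ecrel (P : {set S}) (B : {set S * A}) : rel (vertex S A) :=
  fun x y => [&& x \in Vset P B, y \in Vset P B & edge fail d x y].

Lemma is_ECP (P : {set S}) (B : {set S * A}) : is_EC fail d P B ->
  [/\ (forall p, p \in P -> exists c, (p, c) \in B),
      (forall pa, pa \in B -> edge fail d (inl pa.1) (inr pa)),
      (forall pa y, pa \in B -> d pa.1 pa.2 y -> y \in P) &
      (forall u v, u \in Vset P B -> v \in Vset P B -> connect (ecrel P B) u v)].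
Proof.
case/andP => /andP [/forall_inP H1 /forall_inP H2] /forall_inP H3; split.
- by move=> p /H1 /existsP.
- by move=> pa /H2 /andP [].
- by move=> pa y /H2 /andP [_ /forallP /(_ y) /implyP].
- by move=> u v /H3 /forall_inP; apply.
Qed.

Lemma is_ECI (P : {set S}) (B : {set S * A}) :
  (forall p, p \in P -> exists c, (p, c) \in B) ->
  (forall pa, pa \in B -> edge fail d (inl pa.1) (inr pa)) ->
  (forall pa y, pa \in B -> d pa.1 pa.2 y -> y \in P) ->
  (forall u v, u \in Vset P B -> v \in Vset P B -> connect (ecrel P B) u v) ->
  is_EC fail d P B.
Proof.
move=> H1 H2 H3 H4; apply/andP; split.
  apply/andP; split.
    by apply/forall_inP => p /H1 /existsP.
  apply/forall_inP => pa pB; rewrite H2 //=; apply/forallP => y; apply/implyP.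
  exact: H3.
by apply/forall_inP => u uV; apply/forall_inP => v vV; apply: H4.
Qed.

Lemma ec_src (P : {set S}) (B : {set S * A}) pa : is_EC fail d P B -> pa \in B -> pa.1 \in P.
Proof.
case: pa => p c; case/is_ECP => _ H2 H3 H4 pB.
have := H2 _ pB; rewrite /edge /= eqxx /= => /existsP [y /andP [dy _]].
have yP := H3 _ _ pB dy.
have : connect (ecrel P B) (inl y) (inr (p, c)) by apply: H4; rewrite inE.
case/last_edge => // w; rewrite /ecrel => /and3P [wV _].
case: w wV => [x|[x c']] //; rewrite inE => xP /=.
by case/andP => /eqP ->.
Qed.

Lemma ec_P (P : {set S}) (B : {set S * A}) : is_EC fail d P B -> P = [set pa.1 | pa in B].
Proof.
move=> EC; apply/setP => p; apply/idP/imsetP.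
  by case/is_ECP: EC => H1 _ _ _ /H1 [c pc]; exists (p, c).
by case=> pa pB ->; exact: ec_src EC pB.
Qed.

Lemma ec_union (P1 : {set S}) (B1 : {set S * A}) (P2 : {set S}) (B2 : {set S * A}) z : is_EC fail d P1 B1 -> is_EC fail d P2 B2 ->
  z \in P1 -> z \in P2 -> is_EC fail d (P1 :|: P2) (B1 :|: B2).
Proof.
move=> E1 E2 z1 z2.
have sub1 : subrel (ecrel P1 B1) (connect (ecrel (P1 :|: P2) (B1 :|: B2))).
  move=> x y /and3P [xV yV e]; apply: connect1; rewrite /ecrel e andbT; clear e.
  by move: xV yV; case: x => [x|pa]; case: y => [y|pb]; rewrite !inE => H H'; rewrite H H'.
have sub2 : subrel (ecrel P2 B2) (connect (ecrel (P1 :|: P2) (B1 :|: B2))).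
  move=> x y /and3P [xV yV e]; apply: connect1; rewrite /ecrel e andbT; clear e.
  by move: xV yV; case: x => [x|pa]; case: y => [y|pb]; rewrite !inE => H H'; rewrite H H' !orbT.
case/is_ECP: E1 => a1 b1 c1 d1; case/is_ECP: E2 => a2 b2 c2 d2.
apply: is_ECI.
- move=> p; rewrite inE => /orP [/a1|/a2] [c pc]; exists c; by rewrite inE pc ?orbT.
- by move=> pa; rewrite inE => /orP [/b1|/b2].
- by move=> pa y; rewrite inE => /orP [pB dy|pB dy]; rewrite inE ?(c1 _ _ pB dy) ?(c2 _ _ pB dy) ?orbT.
have toz u : u \in Vset (P1 :|: P2) (B1 :|: B2) ->
    connect (ecrel (P1 :|: P2) (B1 :|: B2)) u (inl z) /\
    connect (ecrel (P1 :|: P2) (B1 :|: B2)) (inl z) u.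
  case: u => [x|pa]; rewrite !inE => /orP [H|H].
  - by split; apply: (connect_sub sub1); apply: d1; rewrite inE.
  - by split; apply: (connect_sub sub2); apply: d2; rewrite inE.
  - by split; apply: (connect_sub sub1); apply: d1; rewrite inE.
  - by split; apply: (connect_sub sub2); apply: d2; rewrite inE.
move=> u v /toz [uz _] /toz [_ zv]; exact: connect_trans uz zv.
Qed.

Lemma is_MECP (P : {set S}) (B : {set S * A}) : is_MEC fail d P B -> is_EC fail d P B /\
  forall P' B', is_EC fail d P' B' -> B \subset B' -> P' = P /\ B' = B.
Proof.
case/andP => EC /forallP H; split => // P' B' EC' sub.
by move: (H P') => /forallP /(_ B') /implyP; rewrite EC' sub => /(_ isT) /eqP [-> ->].
Qed.

Lemma mec_uniq (P1 : {set S}) (B1 : {set S * A}) (P2 : {set S}) (B2 : {set S * A}) z : is_MEC fail d P1 B1 -> is_MEC fail d P2 B2 ->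
  z \in P1 -> z \in P2 -> P1 = P2.
Proof.
move=> /is_MECP [E1 M1] /is_MECP [E2 M2] z1 z2.
have EU := ec_union E1 E2 z1 z2.
have [h1 _] := M1 _ _ EU (finset.subsetUl _ _).
have [h2 _] := M2 _ _ EU (finset.subsetUr _ _).
by rewrite -h1 h2.
Qed.

Lemma ec_in_mec (P : {set S}) (B : {set S * A}) : is_EC fail d P B ->
  exists P', exists B', is_MEC fail d P' B' /\ B \subset B'.
Proof.
move=> EC.
pose Q := fun PB : {set S} * {set S * A} => is_EC fail d PB.1 PB.2 && (B \subset PB.2).
have QPB : Q (P, B) by rewrite /Q EC subxx.
case: (arg_maxnP (fun PB : {set S} * {set S * A} => #|PB.2|) QPB) => [[P' B']] /andP /= [E' sB'] Hmax.
exists P', B'; split => //; apply/andP; split => //.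
apply/forallP => P''; apply/forallP => B''; apply/implyP => /andP [E'' sB''].
have : B'' == B'.
  rewrite eq_sym eqEcard sB'' /=.
  by apply: (Hmax (P'', B'')); rewrite /Q E'' /= (fintype.subset_trans sB' sB'').
move/eqP => eB; rewrite (ec_P E'') (ec_P E') eB //.
Qed.

Lemma cls_mec (P : {set S}) (B : {set S * A}) x : is_MEC fail d P B -> x \in P -> cls fail d x = P.
Proof.
move=> M xP; rewrite /cls; case: pickP => [[P' B'] /andP /= [M' xP']|].
  exact: mec_uniq M' M xP' xP.
by move/(_ (P, B)); rewrite /= M xP.
Qed.

End ECs.

Section NoEC.
Variables (S A : finType) (fin fail : S) (d : S -> A -> S -> bool).
Hypothesis Hiso : iso_to_quotient fin fail d.

Lemma iso_cls_inj : injective (cls fail d).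
Proof.
case: Hiso => f [finj fQ fsurj _ _].
have E : quot_states fail d = [set f x | x : S].
  apply/eqP; rewrite finset.eqEsubset; apply/andP; split; apply/fintype.subsetP => X.
    by case/fsurj => x <-; apply: imset_f.
  by case/imsetP => x _ ->.
have : #|quot_states fail d| == #|S| by rewrite E card_imset.
rewrite /quot_states => /imset_injP H x y exy; exact: H.
Qed.

Lemma no_self_loop x c : ~~ d x c x.
Proof.
case: Hiso => f [_ _ _ _ ->].
apply/existsP => [[t /existsP [t' /and4P [_ _ _]]]]; by rewrite eqxx.
Qed.

Lemma noEC (P : {set S}) (B : {set S * A}) : is_EC fail d P B -> B = finset.set0.
Proof.
move=> EC; case: (set_0Vmem B) => [//|[[x c] pB]]; exfalso.
case/is_ECP: (EC) => _ H2 _ _.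
have := H2 _ pB; rewrite /edge /= eqxx /= => /existsP [y /andP [dy _]].
case: (ec_in_mec EC) => P' [B' [M sB]].
have pB' : (x, c) \in B' by apply: (fintype.subsetP sB).
have [EC' _] := is_MECP M.
have xP : x \in P' by exact: (ec_src EC' pB').
have yP : y \in P' by case/is_ECP: EC' => _ _ H3 _; exact: (H3 _ _ pB' dy).
have exy : x = y by apply: iso_cls_inj; rewrite (cls_mec M xP) (cls_mec M yP).
by move: dy; rewrite -exy (negbTE (no_self_loop x c)).
Qed.

End NoEC.

Local Open Scope ring_scope.

Section SupFacts.
Variable R : realType.

Lemma sup_geX (E : set R) c e : (forall x, E x -> x <= c) -> E e -> e <= sup E.
Proof. by move=> ub Ee; apply: ub_le_sup => //; exists c. Qed.

Lemma sup_leX (E : set R) c : (exists e, E e) -> (forall x, E x -> x <= c) -> sup E <= c.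
Proof. by move=> [e Ee] ub; apply: ge_sup => //; exists e. Qed.

Lemma fin_argmax (I : finType) (P : pred I) (F : I -> R) i0 :
  P i0 -> exists2 i, P i & forall j, P j -> F j <= F i.
Proof. by move=> Pi0; case: (arg_maxP F Pi0) => i Pi Hi; exists i. Qed.

End SupFacts.

Section Reach.
Variables (R : realType) (S A : finType) (fin : S) (d : S -> A -> S -> bool)
  (val : S -> A -> S -> R).
Hypothesis Hv0 : forall x b y, 0 <= val x b y.
Hypothesis Hv1 : forall x b, avail d x b -> \sum_(y | d x b y) val x b y = 1.
Local Notation strat := (seq (S * A) -> S -> A -> R).

Lemma strat_sum_le1 (sg : strat) : is_strategy d sg -> forall h x, \sum_c sg h x c <= 1.
Proof.
move=> Hs h x; case: (Hs h x) => H0 [Hn Hsum].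
case: (boolP [exists c, avail d x c]) => [/Hsum -> //|/existsPn Hno].
by rewrite big1 // => c _; exact: Hn.
Qed.

Lemma reach_bounds (sg : strat) : is_strategy d sg ->
  forall n h x, 0 <= reach_within fin d val sg n h x <= 1.
Proof.
move=> Hs; elim=> [|n IH] h x /=.
  by case: (x == fin); rewrite /= ?ler01 ?lexx.
case: (x == fin); first by rewrite ler01 lexx.
apply/andP; split.
  apply: sumr_ge0 => c _; apply: mulr_ge0; first by case: (Hs h x) => H _.
  apply: sumr_ge0 => y _; apply: mulr_ge0 => //; by case/andP: (IH (rcons h (x,c)) y).
apply: le_trans (strat_sum_le1 Hs h x).
apply: ler_sum => c _.
case: (Hs h x) => H0 [Hn _].
case: (boolP (avail d x c)) => [av|nav]; last by rewrite Hn // mul0r.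
rewrite ler_piMr // -(Hv1 av); apply: ler_sum => y _.
by rewrite ler_piMr //; case/andP: (IH (rcons h (x, c)) y).
Qed.

Lemma reach_shift (sg : strat) h0 n h x :
  reach_within fin d val sg n (h0 ++ h) x =
  reach_within fin d val (fun h' => sg (h0 ++ h')) n h x.
Proof.
elim: n h x => //= n IH h x; case: (x == fin) => //.
apply: eq_bigr => c _; congr (_ * _); apply: eq_bigr => y _.
by rewrite -IH rcons_cat.
Qed.

Lemma strat_shift (sg : strat) h0 : is_strategy d sg -> is_strategy d (fun h' => sg (h0 ++ h')).
Proof. by move=> H h; exact: H. Qed.

Definition sig0 : seq (S * A) -> S -> A -> R :=
  fun _ x c => ([pick c' | avail d x c'] == Some c)%:R.

Lemma sig0_strat : is_strategy d sig0.
Proof.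
move=> h x; split; first by move=> c; rewrite ler0n.
split.
  move=> c nav; rewrite /sig0; case: pickP => [c' av|_]; last by [].
  by case: eqP => [[ec]|] //; move: nav; rewrite -ec av.
move=> /existsP [c0 av0]; rewrite /sig0; case: pickP => [c' av|/(_ c0)]; last by rewrite av0.
rewrite (bigD1 c') //= eqxx big1 ?addr0 // => c /negbTE nc.
by case: eqP => // [[ec]]; move: nc; rewrite ec eqxx.
Qed.

Lemma reach_le_Preach (sg : strat) : is_strategy d sg -> forall n x,
  reach_within fin d val sg n [::] x <= Preach fin d val sg x.
Proof.
move=> Hs n x; apply: (sup_geX (c := 1)); last by exists n.
by move=> _ [m _ <-]; case/andP: (reach_bounds Hs m [::] x).
Qed.

Lemma Preach_bounds (sg : strat) : is_strategy d sg -> forall x,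
  0 <= Preach fin d val sg x <= 1.
Proof.
move=> Hs x; apply/andP; split.
  apply: le_trans (reach_le_Preach Hs 0 x); by case/andP: (reach_bounds Hs 0 [::] x).
apply: sup_leX; first by exists (reach_within fin d val sg 0 [::] x); exists 0%N.
by move=> _ [m _ <-]; case/andP: (reach_bounds Hs m [::] x).
Qed.

Lemma Preach_le_RewS (sg : strat) : is_strategy d sg -> forall x,
  Preach fin d val sg x <= RewS fin d val x.
Proof.
move=> Hs x; apply: (sup_geX (c := 1)); last by exists sg; split.
by move=> _ [s' [Hs' ->]]; case/andP: (Preach_bounds Hs' x).
Qed.

Lemma RewS_bounds x : 0 <= RewS fin d val x <= 1.
Proof.
apply/andP; split.
  apply: le_trans (Preach_le_RewS sig0_strat x); by case/andP: (Preach_bounds sig0_strat x).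
apply: sup_leX; first by exists (Preach fin d val sig0 x); exists sig0; split => //; exact: sig0_strat.
by move=> _ [s' [Hs' ->]]; case/andP: (Preach_bounds Hs' x).
Qed.

Lemma RewS_dead x : x != fin -> (forall c, ~~ avail d x c) -> RewS fin d val x = 0.
Proof.
move=> xf Hno; apply/eqP; rewrite eq_le; case/andP: (RewS_bounds x) => -> _; rewrite andbT.
apply: sup_leX; first by exists (Preach fin d val sig0 x); exists sig0; split => //; exact: sig0_strat.
move=> _ [sg [Hs ->]].
apply: sup_leX; first by exists (reach_within fin d val sg 0 [::] x); exists 0%N.
move=> _ [[|m] _ <-] /=; rewrite (negbTE xf) //.
rewrite big1 // => c _; rewrite big1 ?mulr0 // => y dy.
by move: (Hno c) => /existsPn /(_ y); rewrite dy.
Qed.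

Definition Qv (V : S -> R) x c := \sum_y val x c y * V y.

Lemma bellman_upper x : x != fin -> [exists c, avail d x c] ->
  exists2 c, avail d x c & RewS fin d val x <= Qv (RewS fin d val) x c.
Proof.
move=> xf /existsP [c0 av0].
have [c avc Hc] := fin_argmax (fun c => Qv (RewS fin d val) x c) av0.
exists c => //.
have Qge0 : 0 <= Qv (RewS fin d val) x c.
  apply: sumr_ge0 => y _; apply: mulr_ge0 => //; by case/andP: (RewS_bounds y).
apply: sup_leX; first by exists (Preach fin d val sig0 x); exists sig0; split => //; exact: sig0_strat.
move=> _ [sg [Hs ->]].
apply: sup_leX; first by exists (reach_within fin d val sg 0 [::] x); exists 0%N.
move=> _ [[|n] _ <-] /=; rewrite (negbTE xf) //.
case: (Hs [::] x) => H0 [Hn Hsum].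
apply: le_trans (_ : \sum_c' sg [::] x c' * Qv (RewS fin d val) x c <= _); last first.
  by rewrite -mulr_suml Hsum ?mul1r //; apply/existsP; exists c0.
apply: ler_sum => c' _.
case: (boolP (avail d x c')) => [av|nav]; last by rewrite Hn // !mul0r.
apply: ler_wpM2l => //; apply: le_trans (Hc c' av).
rewrite /Qv [X in _ <= X](bigID (d x c')) /= -[X in X <= _]addr0; apply: lerD; last first.
  apply: sumr_ge0 => y _; apply: mulr_ge0 => //; by case/andP: (RewS_bounds y).
apply: ler_sum => y _; apply: ler_wpM2l => //.
have := reach_shift sg [:: (x, c')] n [::] y; rewrite cats0 => ->.
apply: le_trans (reach_le_Preach (strat_shift _ Hs) n y) _.
exact: Preach_le_RewS (strat_shift _ Hs) y.
Qed.

End Reach.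

Lemma geom_small (R : realType) (c e : R) :
  0 <= c -> c < 1 -> 0 < e -> exists k, c ^+ k <= e.
Proof.
move=> c0 c1 e0; set dl := 1 - c.
have d0 : 0 < dl by rewrite subr_gt0.
have cd : c + dl = 1 by rewrite /dl addrC subrK.
have H : forall k, c ^+ k * (1 + k%:R * dl) <= 1.
  elim=> [|k IH]; first by rewrite expr0 mul0r addr0 mul1r.
  rewrite exprS -natr1.
  have p0 : 0 <= c ^+ k := exprn_ge0 _ c0.
  have p1 : c ^+ k <= 1 := exprn_ile1 k c0 (ltW c1).
  have k0 : 0 <= k%:R :> R := ler0n _ _.
  have h1 : c * (c ^+ k * (1 + k%:R * dl)) <= c * 1 by rewrite ler_wpM2l.
  have h2 : (c * c ^+ k) * dl <= 1 * dl.
    by rewrite ler_wpM2r ?(ltW d0) // mulr_ile1 // ltW.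
  nra.
have ed0 : 0 < e * dl by rewrite mulr_gt0.
set x := (e * dl)^-1.
have x0 : 0 <= x by rewrite ltW // invr_gt0.
have := archi_boundP x0; set k := Num.Def.archi_bound x => kx.
exists k.
have Hk : 1 < k%:R * dl * e.
  have : x * (e * dl) < k%:R * (e * dl) by rewrite ltr_pM2r.
  rewrite mulVf ?gt_eqF //; nra.
have := H k; have := exprn_ge0 k c0; nra.
Qed.

Fixpoint gseq (R : realType) (S A : finType) (d : S -> A -> S -> bool)
  (val : S -> A -> S -> R) (pi : S -> A) (live : pred S) (n : nat) (x : S) : R :=
  (live x)%:R * (if n is n'.+1 then
     \sum_(y | d x (pi x) y) val x (pi x) y * gseq d val pi live n' y else 1).

Section Main.
Variables (R : realType) (S A : finType) (fin fail : S) (d : S -> A -> S -> bool)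
  (val : S -> A -> S -> R).
Hypothesis HM : is_pMDP fin fail d.
Hypothesis Hiso : iso_to_quotient fin fail d.
Hypothesis Hval : graph_preserving d val.
Variables (s : S) (a b : A).
Hypothesis bab : b != a.
Hypothesis avb : avail d s b.
Hypothesis Htb : Qv val (RewS fin d val) s a <= Qv val (RewS fin d val) s b.

Local Notation d' := (remove_pair d s a).
Local Notation VM := (RewS fin d val).
Local Notation VN := (RewS fin d' val).

Lemma Hv0 x c y : 0 <= val x c y.
Proof.
case: Hval => H1 [H2 _]; case: (boolP (d x c y)) => [/H1 /ltW //|/H2 ->//].
Qed.

Lemma val_off x c y : ~~ d x c y -> val x c y = 0.
Proof. by case: Hval => _ [H2 _]; apply: H2. Qed.

Lemma Hv1 x c : avail d x c -> \sum_(y | d x c y) val x c y = 1.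
Proof.
move=> av; case: Hval => _ [H2 H3].
rewrite -(H3 x c av) [RHS](bigID (d x c)) /= [X in _ = _ + X]big1 ?addr0 // => y.
exact: H2.
Qed.

Lemma avail'E x c : avail d' x c = avail d x c && ~~ ((x == s) && (c == a)).
Proof.
rewrite andbC; case E: ((x == s) && (c == a)) => /=.
  by apply/existsP => -[y]; rewrite /remove_pair E andbF.
by apply: eq_existsb => y; rewrite /remove_pair E andbT.
Qed.

Lemma avail'_pair x c : avail d' x c -> ~~ ((x == s) && (c == a)) /\ avail d x c.
Proof. by rewrite avail'E => /andP []. Qed.

Lemma d'_eq x c : ~~ ((x == s) && (c == a)) -> d' x c =1 d x c.
Proof. by move=> np y; rewrite /remove_pair np andbT. Qed.

Lemma Hv1' x c : avail d' x c -> \sum_(y | d' x c y) val x c y = 1.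
Proof. by case/avail'_pair => np av; rewrite (eq_bigl _ _ (d'_eq np)) Hv1. Qed.

Lemma fin_dead c y : ~~ d fin c y.
Proof. by case: HM => _ H; apply/negP => /H; rewrite eqxx. Qed.

Lemma fail_dead c y : ~~ d fail c y.
Proof. by case: HM => _ H; apply/negP => /H; rewrite eqxx andbF. Qed.

Lemma b_avail' : avail d' s b.
Proof. by rewrite avail'E avb /= eqxx (negbTE bab). Qed.

Lemma ex_avail x : [exists c, avail d x c] = [exists c, avail d' x c].
Proof.
apply/existsP/existsP => [[c av]|[c]].
  case E: ((x == s) && (c == a)).
    by move/andP: E => [/eqP -> _]; exists b; exact: b_avail'.
  by exists c; rewrite avail'E av E.
by rewrite avail'E => /andP [av _]; exists c.
Qed.

Lemma avail_notfin x c : avail d x c -> x != fin.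
Proof. by case/existsP => y; case: HM => _ H /H /andP []. Qed.

Lemma strat_NM (sg : seq (S * A) -> S -> A -> R) :
  is_strategy d' sg -> is_strategy d sg.
Proof.
move=> H h x; case: (H h x) => H0 [Hn Hs]; split => //; split.
  by move=> c nav; apply: Hn; rewrite avail'E (negbTE nav).
by move=> ex; apply: Hs; rewrite -ex_avail.
Qed.

Lemma reach_NM (sg : seq (S * A) -> S -> A -> R) : is_strategy d' sg ->
  forall n h x, reach_within fin d' val sg n h x = reach_within fin d val sg n h x.
Proof.
move=> H; elim=> //= n IH h x; case: (x == fin) => //; apply: eq_bigr => c _.
case: (boolP (avail d' x c)) => [av|nav]; last first.
  by case: (H h x) => _ [Hn _]; rewrite Hn // !mul0r.
case/avail'_pair: av => np _; congr (_ * _); rewrite (eq_bigl _ _ (d'_eq np)).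
by apply: eq_bigr => y _; rewrite IH.
Qed.
Lemma VN_le_VM : VN s <= VM s.
Proof.
apply: sup_leX.
  exists (Preach fin d' val (@sig0 R S A d') s); exists (@sig0 R S A d'); split => //.
  exact: sig0_strat.
move=> _ [sg [Hsg ->]].
have -> : Preach fin d' val sg s = Preach fin d val sg s.
  by rewrite /Preach (funext (fun n => reach_NM Hsg n [::] s)).
exact: (@Preach_le_RewS R S A fin d val Hv0 Hv1 _ (strat_NM Hsg) s).
Qed.

Definition live x := (x != fin) && [exists c, avail d' x c].

Lemma VM_dead x : ~~ live x -> x != fin -> VM x = 0.
Proof.
rewrite /live => nl xf; apply: (RewS_dead Hv0 Hv1 xf) => c; apply/negP => av.
by move: nl; rewrite xf -ex_avail /=; apply/negP/negPn/existsP; exists c.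
Qed.

Lemma Qv_d' V x c : ~~ ((x == s) && (c == a)) ->
  Qv val V x c = \sum_(y | d' x c y) val x c y * V y.
Proof.
move=> np; rewrite /Qv (bigID (d' x c)) /= [X in _ + X]big1 ?addr0 // => y.
by rewrite (d'_eq np) => nd; rewrite val_off // mul0r.
Qed.

Lemma pi_exists : exists pi : S -> A, forall x, live x ->
  avail d' x (pi x) /\ VM x <= Qv val VM x (pi x).
Proof.
apply: (@fin_all_exists S (fun _ => A) (fun x c => live x -> avail d' x c /\ VM x <= Qv val VM x c)) => x.
case: (boolP (live x)) => [/andP [xf ex]|_]; last by exists a.
have := bellman_upper Hv0 Hv1 xf; rewrite ex_avail => /(_ ex) [c av Hc].
case E: ((x == s) && (c == a)).
  move/andP: E => [/eqP ex' /eqP ec]; subst x c.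
  by exists b => _; split; [exact: b_avail' | exact: le_trans Hc Htb].
by exists c => _; split => //; rewrite avail'E av E.
Qed.

Section Pi.
Variable pi : S -> A.
Hypothesis Hpi : forall x, live x -> avail d' x (pi x) /\ VM x <= Qv val VM x (pi x).

Definition spi : seq (S * A) -> S -> A -> R :=
  fun _ x c => ((c == pi x) && live x)%:R.

Lemma spi_strat : is_strategy d' spi.
Proof.
move=> h x; split; first by move=> c; rewrite ler0n.
split.
  move=> c nav; rewrite /spi; case E: (_ && _) => //.
  by case/andP: E => /eqP ec /Hpi [av _]; move: nav; rewrite ec av.
move=> ex.
have lx : live x.
  rewrite /live ex andbT; case/existsP: ex => c /avail'_pair [_]; exact: avail_notfin.
rewrite (bigD1 (pi x)) // big1 ?addr0; last by move=> c /negbTE nc; rewrite /spi nc.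
by rewrite /spi eqxx lx /= ?addr0.
Qed.

Local Notation g := (gseq d' val pi live).

Lemma g_dead n x : ~~ live x -> g n x = 0.
Proof. by move/negbTE => H; case: n => [|n] /=; rewrite H mul0r. Qed.

Lemma g_S n x : g n.+1 x = (live x)%:R * \sum_(y | d' x (pi x) y) val x (pi x) y * g n y.
Proof. by []. Qed.

Lemma g_0 x : live x -> g 0 x = 1.
Proof. by move=> lx /=; rewrite lx mulr1. Qed.

Lemma g_bounds n x : 0 <= g n x <= 1.
Proof.
elim: n x => [|n IH] x.
  case: (boolP (live x)) => [lx|nlx]; last by rewrite g_dead // lexx ler01.
  by rewrite g_0 // ler01 lexx.
case: (boolP (live x)) => [lx|nlx]; last by rewrite g_dead // lexx ler01.
rewrite g_S lx mul1r; apply/andP; split.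
  apply: sumr_ge0 => y _; apply: mulr_ge0; [exact: Hv0 | by case/andP: (IH y)].
rewrite -(Hv1' (proj1 (Hpi lx))); apply: ler_sum => y _.
by rewrite ler_piMr ?Hv0 //; case/andP: (IH y).
Qed.

Lemma g_le n x : g n.+1 x <= g n x.
Proof.
elim: n x => [|n IH] x.
  case: (boolP (live x)) => [lx|nlx]; last by rewrite !g_dead.
  by rewrite g_0 //; case/andP: (g_bounds 1 x).
rewrite (g_S n.+1) (g_S n); apply: ler_wpM2l; first exact: ler0n.
by apply: ler_sum => y _; apply: ler_wpM2l; [exact: Hv0 | exact: IH].
Qed.

Lemma g_mono m k x : g (m + k) x <= g m x.
Proof.
elim: k => [|k IH]; first by rewrite addn0.
by rewrite addnS; exact: le_trans (g_le _ _) IH.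
Qed.

Lemma g_mult m c : 0 <= c -> (forall y, g m y <= c) ->
  forall n x, g (n + m) x <= c * g n x.
Proof.
move=> c0 Hc; elim=> [|n IH] x.
  rewrite add0n; case: (boolP (live x)) => [lx|nlx]; last by rewrite !g_dead // mulr0.
  by rewrite g_0 // mulr1.
rewrite addSn !g_S [X in _ <= X]mulrCA; apply: ler_wpM2l; first exact: ler0n.
rewrite mulr_sumr; apply: ler_sum => y _; rewrite mulrCA.
by apply: ler_wpM2l; [exact: Hv0 | exact: IH].
Qed.

Lemma g_geom K c : 0 <= c -> (forall y, g K y <= c) ->
  forall k x, g (k * K) x <= c ^+ k.
Proof.
move=> c0 Hc; elim=> [|k IH] x.
  by rewrite mul0n expr0; case/andP: (g_bounds 0 x).
rewrite mulSn addnC exprS; apply: le_trans (g_mult c0 Hc (k * K) x) _.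
by rewrite ler_wpM2l.
Qed.

Lemma reach_fin n h : reach_within fin d' val spi n h fin = 1.
Proof. by case: n => [|n] /=; rewrite eqxx. Qed.

Lemma KB n h x : VM x <= reach_within fin d' val spi n h x + g n x.
Proof.
elim: n h x => [|n IH] h x.
  case: (boolP (x == fin)) => [/eqP ->|xf].
    rewrite reach_fin; apply: le_trans (_ : 1 <= _).
      by case/andP: (RewS_bounds fin Hv0 Hv1 fin).
    by rewrite lerDl; case/andP: (g_bounds 0 fin).
  case: (boolP (live x)) => [lx|nlx].
    rewrite g_0 // /= (negbTE xf) add0r; by case/andP: (RewS_bounds fin Hv0 Hv1 x).
  rewrite VM_dead // g_dead // addr0; by case/andP: (reach_bounds fin Hv0 Hv1' spi_strat 0 h x).
case: (boolP (x == fin)) => [/eqP ->|xf].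
  rewrite reach_fin; apply: le_trans (_ : 1 <= _).
    by case/andP: (RewS_bounds fin Hv0 Hv1 fin).
  by rewrite lerDl; case/andP: (g_bounds n.+1 fin).
case: (boolP (live x)) => [lx|nlx]; last first.
  rewrite VM_dead // g_dead // addr0.
  by case/andP: (reach_bounds fin Hv0 Hv1' spi_strat n.+1 h x).
have [av Hq] := Hpi lx.
have np := proj1 (avail'_pair av).
have -> : reach_within fin d' val spi n.+1 h x =
   \sum_(y | d' x (pi x) y) val x (pi x) y * reach_within fin d' val spi n (rcons h (x, pi x)) y.
  rewrite /= (negbTE xf) (bigD1 (pi x)) //=.
  rewrite [X in _ + X](big1 _ (fun c => c != pi x)) ?addr0; last first.
    by move=> c /negbTE nc; rewrite /spi nc mul0r.
  by rewrite /spi eqxx lx mul1r.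
rewrite g_S lx mul1r.
apply: le_trans Hq _.
rewrite (Qv_d' _ np) -big_split /=; apply: ler_sum => y _; rewrite -mulrDr.
by apply: ler_wpM2l; [exact: Hv0 | exact: IH].
Qed.

Lemma KE x0 : exists n, g n x0 < 1.
Proof.
case: (pselect (exists n, g n x0 < 1)) => // Hno; exfalso.
have all1 : forall y, (forall n, ~ g n y < 1) -> forall n, g n y = 1.
  move=> y H n; case/andP: (g_bounds n y) => _; rewrite le_eqVlt.
  by case/orP => [/eqP //|lt]; case: (H n).
pose C := [set y | `[< forall n, g n y = 1 >]].
have inC y : (y \in C) <-> (forall n, g n y = 1).
  by rewrite inE; split => [/asboolP|?]; [|apply/asboolP].
have x0C : x0 \in C by apply/inC; apply: all1 => n H; apply: Hno; exists n.
have Clive y : y \in C -> live y.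
  move/inC/(_ 0%N) => /=; case: (live y) => //=.
  by rewrite mulr0n mul0r => /eqP; rewrite eq_sym oner_eq0.
have Cclosed y z : y \in C -> d y (pi y) z -> z \in C.
  move=> yC dz; have ly := Clive _ yC; have [av _] := Hpi ly.
  have np := proj1 (avail'_pair av).
  have dz' : d' y (pi y) z by rewrite (d'_eq np).
  apply/inC => n; move/inC: yC => /(_ n.+1); rewrite g_S ly mul1r => Hs.
  have Hs1 := Hv1' av.
  have H0 : \sum_(w | d' y (pi y) w) val y (pi y) w * (1 - g n w) = 0.
    rewrite (eq_bigr (fun w => val y (pi y) w - val y (pi y) w * g n w)); last first.
      by move=> w _; rewrite mulrBr mulr1.
    by rewrite sumrB Hs1 Hs subrr.
  have nn : forall w, d' y (pi y) w -> 0 <= val y (pi y) w * (1 - g n w).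
    move=> w _; apply: mulr_ge0; first exact: Hv0.
    by rewrite subr_ge0; case/andP: (g_bounds n w).
  have := psumr_eq0P nn H0 dz'.
  move/eqP; rewrite mulf_eq0 => /orP [/eqP v0|].
    by have := (proj1 Hval) _ _ _ dz; rewrite v0 ltxx.
  by rewrite subr_eq0 => /eqP <-.
have failC : fail \notin C.
  apply/negP => /Clive /andP [_ /existsP [c]]; rewrite avail'E => /andP [/existsP [y]].
  by rewrite (negbTE (fail_dead c y)).
pose cl (D : {set S}) := [forall y in D, forall z, d y (pi y) z ==> (z \in D)].
pose P (D : {set S}) := [&& D \subset C, D != finset.set0 & cl D].
have PC : P C.
  rewrite /P fintype.subxx /=; apply/andP; split.
    by apply/set0Pn; exists x0.
  apply/forall_inP => y yC; apply/forallP => z; apply/implyP; exact: Cclosed.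
case: (arg_minnP (fun D : {set S} => #|D|) PC) => D /and3P [DC Dne Dcl] Dmin.
have Dcl' y z : y \in D -> d y (pi y) z -> z \in D.
  move=> yD; move: Dcl => /forall_inP /(_ y yD) /forallP H dz.
  by move: (H z) => /implyP; apply.
have DinC y : y \in D -> y \in C by move=> yD; apply: (fintype.subsetP DC).
pose B := [set (y, pi y) | y in D].
have yB y : y \in D -> (y, pi y) \in B by move=> yD; apply/imsetP; exists y.
have succ y : y \in D -> exists z, d y (pi y) z.
  move=> yD; have [av _] := Hpi (Clive _ (DinC _ yD)).
  by case/avail'_pair: av => _ /existsP.
have Bedge y : y \in D -> edge fail d (inl y) (inr (y, pi y)).
  move=> yD; rewrite /edge eqxx /=; apply/existsP; case: (succ y yD) => z dz.
  exists z; rewrite dz /=; apply/eqP => zf; move: failC.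
  by rewrite -zf (DinC _ (Dcl' _ _ yD dz)).
set e := ecrel fail d D B.
have eP y : y \in D -> e (inl y) (inr (y, pi y)).
  by move=> yD; rewrite /e /ecrel !inE yD yB ?Bedge.
have eS y z : y \in D -> d y (pi y) z -> e (inr (y, pi y)) (inl z).
  by move=> yD dz; rewrite /e /ecrel !inE yB //= (Dcl' _ _ yD dz) /= dz.
have eSP y z : y \in D -> d y (pi y) z -> connect e (inl y) (inl z).
  move=> yD dz; apply: (connect_trans (y := inr (y, pi y))); apply: connect1.
    exact: eP.
  exact: eS.
have reachD y z : connect e (inl y) (inl z) -> y \in D -> z \in D.
  move=> cz yD; case: (eqVneq (inl y : vertex S A) (inl z)) => [[<-]//|ne].
  by case: (last_edge cz ne) => w /and3P [_]; rewrite inE.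
have full y z : y \in D -> z \in D -> connect e (inl y) (inl z).
  move=> yD zD; pose Rx := [set w | connect e (inl y) (inl w)].
  have RxD : Rx \subset D.
    by apply/fintype.subsetP => w; rewrite inE => /reachD; apply.
  have PR : P Rx.
    rewrite /P (fintype.subset_trans RxD DC) /=; apply/andP; split.
      by apply/set0Pn; exists y; rewrite inE connect0.
    apply/forall_inP => w; rewrite inE => cw; apply/forallP => w'; apply/implyP => dw.
    by rewrite inE; apply: connect_trans cw (eSP _ _ (reachD _ _ cw yD) dw).
  have cardle := Dmin _ PR.
  have : Rx == D by rewrite eqEcard RxD cardle.
  by move/eqP => RD; move: zD; rewrite -RD inE.
have EC : is_EC fail d D B.
  apply: is_ECI.
  - by move=> p pD; exists (pi p); apply: yB.
  - by move=> pa /imsetP [y yD ->]; exact: Bedge.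
  - by move=> pa z /imsetP [y yD ->] /= dz; exact: Dcl' yD dz.
  have toS u : u \in Vset D B -> exists2 y, y \in D & connect e u (inl y).
    case: u => [y|[y c]]; rewrite inE => uV.
      by exists y => //; exact: connect0.
    case/imsetP: uV => w wD [-> ->]; case: (succ w wD) => z dz.
    by exists z; [exact: Dcl' wD dz | apply: connect1; exact: eS].
  have fromS v : v \in Vset D B -> exists2 y, y \in D & connect e (inl y) v.
    case: v => [y|[y c]]; rewrite inE => vV.
      by exists y => //; exact: connect0.
    case/imsetP: vV => w wD [-> ->].
    by exists w => //; apply: connect1; exact: eP.
  move=> u v /toS [y yD uy] /fromS [z zD zv].
  exact: connect_trans uy (connect_trans (full _ _ yD zD) zv).
have := noEC Hiso EC; case/set0Pn: Dne => y yD HB.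
by move: (yB _ yD); rewrite HB inE.
Qed.

Lemma VM_le_VN : VM s <= VN s.
Proof.
have [nf Hnf] := fin_all_exists KE.
pose K := (\max_(y : S) nf y)%N.
have HK y : g K y < 1.
  have := g_mono (nf y) (K - nf y) y; rewrite subnKC ?leq_bigmax // => H.
  exact: le_lt_trans H (Hnf y).
have [ym _ Hym] := @fin_argmax R S xpredT (fun y => g K y) fin isT.
have c0 : 0 <= g K ym by case/andP: (g_bounds K ym).
have Hc : forall y, g K y <= g K ym by move=> y; exact: Hym.
apply/ler_addgt0Pr => e e0.
have [k Hk] := geom_small c0 (HK ym) e0.
apply: le_trans (KB (k * K) [::] s) _; apply: lerD.
  apply: le_trans (reach_le_Preach fin Hv0 Hv1' spi_strat (k * K) s) _.
  exact: (@Preach_le_RewS R S A fin d' val Hv0 Hv1' spi spi_strat s).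
exact: le_trans (g_geom c0 Hc k s) Hk.
Qed.

End Pi.

Lemma main_eq : VM s = VN s.
Proof.
have [pi Hpi] := pi_exists.
by apply/eqP; rewrite eq_le (VM_le_VN Hpi) VN_le_VM.
Qed.

End Main.

Theorem theorem6 (R : realType) (S A : finType) (fin fail : S)
  (d : S -> A -> S -> bool)
  (HM : is_pMDP fin fail d)
  (Hiso : iso_to_quotient fin fail d)
  (val : S -> A -> S -> R) (Hval : graph_preserving d val)
  (s : S) (a : A)
  (Htri : @trianglelefteq R S A fin fail d (inr (s, a))
            (succs fail d (inl s) :\ inr (s, a))) :
  RewS fin d val s = RewS fin (remove_pair d s a) val s.
Proof.
case: (Htri val Hval) => w; rewrite !inE => /andP [nw ew] Hle.
case: w nw ew Hle => [x|[x c]] //= nw /andP [/eqP ex /existsP [y /andP [dy _]]] Hle.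
subst x.
have cab : c != a by apply: contraNneq nw => ->.
have avc : avail d s c by apply/existsP; exists y.
exact: (main_eq HM Hiso Hval cab avc Hle).
Qed.
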